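(* For any $k \ge 1$, the number of Grassmannian permutations of all sizes $m \ge 0$ (the empty permutation of size $0$ included) that avoid $\operatorname{id}_k = 12\cdots k$ is \[ \sum_{m=0}^{2k-2} |\mathcal{G}_m(\operatorname{id}_k)| = C_{k+1} - \binom{k}{2} - 1, \] and there are none of size $m \ge 2k-1$. Here $C_n=\frac{1}{n+1}\binom{2n}{n}$.
   Context: A permutation is Grassmannian if it has at most one descent (one-line notation). $\mathcal{G}_m(\operatorname{id}_k)$ denotes the set of Grassmannian permutations of $[m]$ that avoid (do not contain as an order-isomorphic subsequence) the identity permutation $12\cdots k$. *)

(* Defs.v *)
From mathcomp Require Import all_boot all_order all_fingroup.
Set Implicit Arguments. Unset Strict Implicit. Unset Printing Implicit Defensive.

Definition oneline (m : nat) (s : 'S_m) : seq nat :=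
  [seq val (s i) | i <- enum 'I_m].

Definition ndes (m : nat) (s : 'S_m) : nat :=
  let w := oneline s in count (fun i => nth 0 w i.+1 < nth 0 w i) (iota 0 m.-1).

Definition grassmannian (m : nat) (s : 'S_m) : bool := ndes s <= 1.

Definition contains (m k : nat) (s : 'S_m) (p : 'S_k) : bool :=
  [exists f : {ffun 'I_k -> 'I_m},
     [forall a : 'I_k, forall b : 'I_k,
        ((a < b) ==> (f a < f b)) && ((s (f a) < s (f b)) == (p a < p b))]].

Definition avoids (m k : nat) (s : 'S_m) (p : 'S_k) : bool := ~~ contains s p.

Definition id_perm (k : nat) : 'S_k := 1%g.

Definition Gm_id (m k : nat) : {set 'S_m} :=
  [set s : 'S_m | grassmannian s && avoids s (id_perm k)].

Definition catalan (n : nat) : nat := 'C(2 * n, n) %/ n.+1.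

(* Main.v *)
Require Import Defs.
From mathcomp Require Import all_boot all_order all_fingroup.
From mathcomp Require Import zify.
Set Implicit Arguments. Unset Strict Implicit. Unset Printing Implicit Defensive.

Fixpoint phiA (u : seq bool) : seq nat :=
  match u with [::] => [::] | b :: u' => if b then rcons (phiA u') (size u') else phiA u' end.
Fixpoint phiB (u : seq bool) : seq nat :=
  match u with [::] => [::] | b :: u' => if b then phiB u' else rcons (phiB u') (size u') end.
Definition phi u := phiA u ++ phiB u.
Fixpoint lisw (u : seq bool) : nat :=
  match u with [::] => 0 | b :: u' => if b then maxn (lisw u') (count id u').+1 else (lisw u').+1 end.

Definition hasinc (L : seq nat) k := exists t, [/\ subseq t L, sorted ltn t & size t = k].

Lemma hasinc_le L k j : hasinc L k -> j <= k -> hasinc L j.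
Proof.
move=> [t [st so sz]] jk; exists (take j t); split.
- exact: subseq_trans (take_subseq _ _) st.
- exact: (subseq_sorted ltn_trans (take_subseq _ _) so).
- by rewrite size_take sz; case: ltngtP jk.
Qed.

Lemma hasinc_size L k : hasinc L k -> k <= size L.
Proof. by move=> [t [st _ <-]]; apply: size_subseq. Qed.

Lemma sorted_rcons_lt (s : seq nat) m : sorted ltn s -> (forall x, x \in s -> x < m) -> sorted ltn (rcons s m).
Proof.
case: s => [//|a s] /= so H; rewrite rcons_path so /=; apply: H.
exact: mem_last.
Qed.

Lemma phi_props u :
  [/\ sorted ltn (phiA u), sorted ltn (phiB u), uniq (phi u),
      forall v, (v \in phi u) = (v < size u) &
      size (phiA u) = count id u].
Proof.
elim: u => [|b u [sA sB un me szA]] //=.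
have lt x : x \in phiA u ++ phiB u -> x < size u by rewrite -/(phi u) me.
rewrite /phi; case: b => /=; split => //.
- apply: sorted_rcons_lt => // x xA; apply: lt; by rewrite mem_cat xA.
- by rewrite cat_rcons (perm_uniq (permEl (perm_catCA _ [:: _] _))) /= un andbT; apply/negP => /lt; rewrite ltnn.
- by move=> v; rewrite cat_rcons (perm_mem (permEl (perm_catCA _ [:: _] _))) in_cons -/(phi u) me ltnS [RHS]leq_eqVlt.
- by rewrite -cats1 size_cat szA addnC.
- apply: sorted_rcons_lt => // x xA; apply: lt; by rewrite mem_cat xA orbT.
- by rewrite -rcons_cat (perm_uniq (permEl (perm_rcons _ _))) /= un andbT; apply/negP => /lt; rewrite ltnn.
- by move=> v; rewrite -rcons_cat (perm_mem (permEl (perm_rcons _ _))) in_cons -/(phi u) me ltnS [RHS]leq_eqVlt.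
Qed.

Lemma hasinc0 L : hasinc L 0.
Proof. by exists [::]; split => //; apply: sub0seq. Qed.

Lemma hasinc_rcons L m k : uniq (rcons L m) -> (forall x, x \in L -> x < m) ->
  hasinc (rcons L m) k.+1 <-> hasinc L k.
Proof.
move=> un lt; split.
- move=> [t [st so sz]].
  have := st; move/(subseq_uniqP un)/eqP; rewrite filter_rcons.
  case: ifP => mt /eqP; move: (filter_subseq [in t] L); move: (filter [in t] L) => F FL te.
  + exists F; split => //.
    * apply: (subseq_sorted ltn_trans _ so); rewrite te; exact: subseq_rcons.
    * by move: sz; rewrite te size_rcons => -[].
  + apply: (@hasinc_le _ k.+1) => //; exists t; split => //.
    by rewrite te.
- move=> [t [st so sz]]; exists (rcons t m); split.
  + by rewrite -!cats1 subseq_cat2r.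
  + apply: sorted_rcons_lt => // x /(mem_subseq st); exact: lt.
  + by rewrite size_rcons sz.
Qed.

Lemma hasinc_mid A B m k : uniq (A ++ m :: B) -> sorted ltn A -> (forall x, x \in A ++ B -> x < m) ->
  hasinc (A ++ m :: B) k <-> (hasinc (A ++ B) k \/ k <= (size A).+1).
Proof.
move=> un sA lt; split.
- move=> [t [st so sz]].
  have := st; move/(subseq_uniqP un)/eqP; rewrite filter_cat /=.
  case: ifP => mt /eqP; move: (filter_subseq [in t] A) (filter_subseq [in t] B);
  move: (filter [in t] A) (filter [in t] B) => FA FB FAs FBs te.
  + right; case: FB FBs te => [|y B'] FBs te.
    * by rewrite -sz te size_cat /= addn1 ltnS size_subseq.
    * exfalso; have yB : y \in B by apply: (mem_subseq FBs); rewrite mem_head.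
      have ym : y < m by apply: lt; rewrite mem_cat yB orbT.
      have : sorted ltn [:: m, y & B'].
        by apply: (subseq_sorted ltn_trans _ so); rewrite te; apply: suffix_subseq.
      by rewrite /= => /andP [] my; move: (ltn_trans my ym); rewrite ltnn.
  + left; exists t; split => //; rewrite te; exact: cat_subseq.
- case.
  + move=> [t [st so sz]]; exists t; split => //.
    apply: (subseq_trans st); apply: cat_subseq; [exact: subseq_refl | exact: subseq_cons].
  + move=> kA; apply: (@hasinc_le _ (size A).+1) => //.
    exists (rcons A m); split.
    * by rewrite -cat_rcons; apply: prefix_subseq.
    * apply: sorted_rcons_lt => // x xA; apply: lt; by rewrite mem_cat xA.
    * by rewrite size_rcons.
Qed.

Lemma count_le_lisw u : count id u <= lisw u.
Proof. elim: u => //= b u IH; case: b => /=; lia. Qed.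

Lemma countn_le_lisw u : count negb u <= lisw u.
Proof. elim: u => //= b u IH; case: b => /=; lia. Qed.

Lemma hasinc_phi u k : hasinc (phi u) k <-> k <= lisw u.
Proof.
elim: u k => [|b u IH] k.
- split; last by rewrite leqn0 => /eqP ->; apply: hasinc0.
  by move/hasinc_size.
have [sA sB un me szA] := phi_props u.
have [_ _ un' _ _] := phi_props (b :: u).
case: b un' => /= un'.
- rewrite /phi /= cat_rcons in un' *.
  rewrite hasinc_mid //; last by move=> x; rewrite -/(phi u) me.
  rewrite -/(phi u) IH szA leq_max; split; [by case=> ->; rewrite ?orbT | by case/orP; auto].
- rewrite /phi /= -rcons_cat in un' *; case: k => [|k].
  + by split => // _; apply: hasinc0.
  + by rewrite hasinc_rcons // -/(phi u) ?IH // => x; rewrite me.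
Qed.

Definition desc (w : seq nat) := count (fun i => nth 0 w i.+1 < nth 0 w i) (iota 0 (size w).-1).

Lemma desc_cons2 x y l : desc [:: x, y & l] = (y < x) + desc (y :: l).
Proof.
rewrite /desc /= (iotaDl 1 0) count_map; congr (_ + _).
Qed.

Lemma desc_small l : size l <= 1 -> desc l = 0.
Proof. by case: l => [|x [|y l]]. Qed.

Lemma desc0_sorted l : desc l = 0 -> sorted leq l.
Proof.
elim: l => [|x [|y l] IH] //= h.
move: h; rewrite desc_cons2; case: ltnP => //= xy h; rewrite xy /=; exact: IH.
Qed.

Lemma sorted_desc0 l : sorted leq l -> desc l = 0.
Proof.
elim: l => [|x [|y l] IH] //= /andP [xy so]; rewrite desc_cons2 IH //.
by rewrite ltnNge xy.
Qed.

Lemma desc_cat A B : sorted leq A -> sorted leq B -> desc (A ++ B) <= 1.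
Proof.
elim: A => [|x [|y A] IH] /=.
- by move=> _ /sorted_desc0 ->.
- move=> _; clear IH; case: B => [|z B] sB //=; rewrite desc_cons2 (sorted_desc0 sB); by case: ltnP.
- move=> /andP [xy sA] sB; rewrite desc_cons2 ltnNge xy /=; exact: IH.
Qed.

Lemma desc_split l : desc l <= 1 -> exists A B, [/\ l = A ++ B, sorted leq A & sorted leq B].
Proof.
elim: l => [|x l IH]; first by exists [::], [::].
case: l IH => [|y l] IH.
  by move=> _; exists [:: x], [::].
rewrite desc_cons2; case: ltnP => yx /= h.
- exists [:: x], (y :: l); split => //; apply: desc0_sorted; lia.
- have [A [B [e sA sB]]] := IH h.
  case: A e sA => [|a A] /= e sA.
  + exists (x :: y :: l), [::]; split; rewrite ?cats0 //= yx /=.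
    by rewrite -e in sB.
  + exists (x :: a :: A), B; split; rewrite /= ?e //.
    by move: e => [] ay _; subst a; rewrite yx.
Qed.

Lemma size_oneline m (s : 'S_m) : size (oneline s) = m.
Proof. by rewrite /oneline size_map size_enum_ord. Qed.

Lemma nth_oneline m (s : 'S_m) (i : 'I_m) : nth 0 (oneline s) i = s i.
Proof. by rewrite /oneline (nth_map i) ?size_enum_ord // nth_ord_enum. Qed.

Lemma oneline_inj m (s s' : 'S_m) : oneline s = oneline s' -> s = s'.
Proof. by move=> e; apply/permP => i; apply: val_inj; rewrite /= -!nth_oneline e. Qed.

Lemma oneline_uniq m (s : 'S_m) : uniq (oneline s).
Proof.
rewrite /oneline map_inj_uniq ?enum_uniq // => i j /val_inj; exact: perm_inj.
Qed.

Lemma mem_oneline m (s : 'S_m) v : (v \in oneline s) = (v < m).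
Proof.
apply/mapP/idP => [[i _ ->] | vm]; first exact: ltn_ord.
exists ((s^-1)%g (Ordinal vm)); first by rewrite mem_enum.
by rewrite permKV.
Qed.

Lemma perm_exists m (L : seq nat) : uniq L -> size L = m -> (forall x, x \in L -> x < m) ->
  exists s : 'S_m, oneline s = L.
Proof.
move=> un sz lt.
have H (i : 'I_m) : nth 0 L i < m by apply: lt; apply: mem_nth; rewrite sz.
have inj : injective (fun i => Ordinal (H i)).
  move=> i j [] /eqP; rewrite nth_uniq ?sz // => /eqP e; exact: val_inj.
exists (perm inj); rewrite /oneline.
rewrite (eq_map (g := fun i : 'I_m => nth 0 L i)); last by move=> i; rewrite permE.
by rewrite (map_comp (nth 0 L) (@nat_of_ord m)) val_enum_ord -[RHS](mkseq_nth 0 L) sz.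
Qed.

Lemma sorted_enum_ord n : sorted (relpre val ltn) (enum 'I_n).
Proof. by rewrite -sorted_map val_enum_ord iota_ltn_sorted. Qed.

Lemma contains_hasinc m k (s : 'S_m) : contains s (id_perm k) <-> hasinc (oneline s) k.
Proof.
split.
- move/existsP => [f /forallP H].
  have Hf (a b : 'I_k) : a < b -> f a < f b /\ s (f a) < s (f b).
    move=> ab; move: (H a) => /forallP /(_ b) /andP [/implyP /(_ ab) -> /eqP ->].
    by rewrite !perm1.
  exists (map (fun a => val (s (f a))) (enum 'I_k)); split.
  + rewrite (map_comp (fun i => val (s i)) f) /oneline; apply: map_subseq.
    have tr : transitive (relpre (val : 'I_m -> nat) ltn).
      move=> y x z /= h1 h2; exact: ltn_trans h1 h2.
    have -> : map f (enum 'I_k) = filter [in map f (enum 'I_k)] (enum 'I_m).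
      apply: (irr_sorted_eq tr); first by move=> x /=; rewrite ltnn.
      * rewrite sorted_map; apply: sub_sorted (sorted_enum_ord k) => a b /= ab.
        by case: (Hf a b ab).
      * apply: (sorted_filter tr); exact: sorted_enum_ord.
      * by move=> x; rewrite mem_filter mem_enum andbT.
    exact: filter_subseq.
  + rewrite sorted_map; apply: sub_sorted (sorted_enum_ord k) => a b /= ab.
    by case: (Hf a b ab).
  + by rewrite size_map size_enum_ord.
- move=> [t [/subseqP [msk szm te] so szt]].
  set L := oneline s in szm te.
  have eL : L = map (nth 0 L) (iota 0 m) by rewrite -{1}(mkseq_nth 0 L) size_oneline.
  set pos := mask msk (iota 0 m).
  have tp : t = map (nth 0 L) pos by rewrite te {1}eL -map_mask.
  have szp : size pos = k by rewrite -szt tp size_map.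
  have sp : sorted ltn pos by apply: sorted_mask ltn_trans _ _ (iota_ltn_sorted 0 m).
  have Hp (a : 'I_k) : nth 0 pos a < m.
    have : nth 0 pos a \in pos by apply: mem_nth; rewrite szp.
    by move/mem_mask; rewrite mem_iota.
  apply/existsP; exists [ffun a => Ordinal (Hp a)]; apply/forallP => a; apply/forallP => b.
  rewrite !ffunE /= !perm1.
  have ntp (c : 'I_k) : nat_of_ord (s (Ordinal (Hp c))) = nth 0 t c.
    by rewrite -(nth_oneline s) /= -/L tp (nth_map 0) // szp.
  rewrite !ntp; apply/andP; split.
  + apply/implyP => ab; apply: (sorted_ltn_nth ltn_trans 0 sp) => //; by rewrite inE szp.
  + have mono (c d : 'I_k) : c < d -> nth 0 t c < nth 0 t d.
      move=> cd; apply: (sorted_ltn_nth ltn_trans 0 so) => //; by rewrite inE szt.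
    case: (ltngtP a b) => ab.
    * by rewrite mono.
    * by apply/eqP/negbTE; rewrite -leqNgt ltnW // mono.
    * by rewrite (val_inj ab) ltnn.
Qed.

Lemma iotaSr0 m : iota 0 m.+1 = rcons (iota 0 m) m.
Proof. by rewrite -cats1 -addn1 iotaD. Qed.

Lemma phi_lt u v : v \in phi u -> v < size u.
Proof. by have [_ _ _ me _] := phi_props u; rewrite me. Qed.

Lemma u_recover u : u = map (fun v => v \in phiA u) (rev (iota 0 (size u))).
Proof.
elim: u => [|b u IH] //; rewrite [size (_ :: _)]/= iotaSr0 rev_rcons /=.
have nA : size u \notin phiA u.
  by apply/negP => h; have := phi_lt (v := size u) (u := u); rewrite /phi mem_cat h ltnn => /(_ isT).
case: b; rewrite ?mem_rcons ?in_cons ?eqxx ?(negbTE nA) /=; congr (_ :: _). all: rewrite {1}IH. all: apply/eq_in_map => v; rewrite mem_rev mem_iota /= => vl; by rewrite ?mem_rcons ?in_cons ?(ltn_eqF vl).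


Qed.

Lemma phiAB_filter (P : pred nat) m :
  phiA (map P (rev (iota 0 m))) = filter P (iota 0 m) /\
  phiB (map P (rev (iota 0 m))) = filter (predC P) (iota 0 m).
Proof.
elim: m => [|m [IHA IHB]] //.
rewrite iotaSr0 rev_rcons /= !filter_rcons size_map size_rev size_iota IHA IHB /=.
by case: (P m).
Qed.

Lemma phi_split A B m : sorted ltn A -> sorted ltn B -> uniq (A ++ B) ->
  (forall v, (v \in A ++ B) = (v < m)) ->
  exists u, [/\ size u = m, phiA u = A & phiB u = B].
Proof.
move=> sA sB un me.
have [eA eB] := phiAB_filter (fun v => v \in A) m.
exists (map (fun v => v \in A) (rev (iota 0 m))); split.
- by rewrite size_map size_rev size_iota.
- rewrite eA; apply: (irr_sorted_eq ltn_trans) => //; first by move=> x; rewrite ltnn.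
  + exact: (sorted_filter ltn_trans _ (iota_ltn_sorted 0 m)).
  + move=> v; rewrite mem_filter mem_iota /= add0n.
    case vA: (v \in A) => //=; by rewrite -me mem_cat vA.
- rewrite eB; apply: (irr_sorted_eq ltn_trans) => //; first by move=> x; rewrite ltnn.
  + exact: (sorted_filter ltn_trans _ (iota_ltn_sorted 0 m)).
  + move: un; rewrite cat_uniq => /and3P [_ dis _].
    move=> v; rewrite mem_filter mem_iota /= add0n -me mem_cat.
    case vA: (v \in A) => /=.
    * apply/esym/negP => vB; move/hasP: dis; apply; by exists v.
    * by [].
Qed.

Lemma phi_nseq m : phiA (nseq m false) = [::] /\ phiB (nseq m false) = iota 0 m.
Proof.
elim: m => [|m [IHA IHB]] //; by rewrite iotaSr0 /= IHA IHB size_nseq.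
Qed.

Lemma sorted_cat_lt (A B A' B' : seq nat) : sorted ltn A -> sorted ltn B -> sorted ltn A' ->
  A ++ B = A' ++ B' -> size A < size A' -> sorted ltn (A ++ B).
Proof.
move=> sA sB sA' e lt.
case: A sA e lt => [|a A1] sA e lt //.
case: B sB e => [|b B1] sB e; first by rewrite cats0.
rewrite /= cat_path; move: (sA) (sB) => /= -> /= ->; rewrite andbT.
have h1 : last a A1 = nth 0 A' (size A1).
  rewrite -[last a A1]/(last 0 (a :: A1)) -nth_last /=.
  have -> : nth 0 (a :: A1) (size A1) = nth 0 ((a :: A1) ++ b :: B1) (size A1).
    by rewrite nth_cat /= ltnS leqnn.
  by rewrite e nth_cat (ltn_trans (ltnSn _) lt).
have h2 : b = nth 0 A' (size A1).+1.
  have -> : b = nth 0 ((a :: A1) ++ b :: B1) (size A1).+1.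
    by rewrite nth_cat /= ltnn subnn.
  by rewrite e nth_cat lt.
rewrite h1 h2; by move/sortedP: sA'; apply.
Qed.

Definition good u := (phiA u == [::]) || ~~ sorted ltn (phi u).

Lemma phi_inj u u' : good u -> good u' -> size u = size u' -> phi u = phi u' -> u = u'.
Proof.
move=> gu gu' su e.
have [sA sB _ _ _] := phi_props u.
have [sA' sB' _ _ _] := phi_props u'.
case: (ltngtP (size (phiA u)) (size (phiA u'))) => h.
- have so := sorted_cat_lt sA sB sA' e h.
  move: gu'; rewrite /good -/(phi u') -e so orbF.
  by case: (phiA u') h.
- have so := sorted_cat_lt sA' sB' sA (esym e) h.
  move: gu; rewrite /good -/(phi u) e so orbF.
  by case: (phiA u) h.
- have eA : phiA u = phiA u'.
    by rewrite -(take_size_cat (phiB u) (erefl (size (phiA u)))) [phiA u ++ _]e h take_size_cat.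
  by rewrite (u_recover u) (u_recover u') eA su.
Qed.

Fixpoint allw m : seq (seq bool) :=
  if m is m'.+1 then map (cons true) (allw m') ++ map (cons false) (allw m') else [:: [::]].

Lemma mem_allw m u : (u \in allw m) = (size u == m).
Proof.
elim: m u => [|m IH] [|b u] //=; rewrite mem_cat.
- by apply/negP => /orP [] /mapP [].
- apply/orP/idP.
  + by case=> /mapP [w]; rewrite IH => /eqP <- [_ ->].
  + rewrite eqSS => h; case: b; [left | right]; apply/mapP; exists u => //; by rewrite IH.
Qed.

Lemma uniq_allw m : uniq (allw m).
Proof.
elim: m => [|m IH] //=; rewrite cat_uniq !map_inj_uniq //; try by move=> x y [].
rewrite IH andbT; apply/hasP => -[w /mapP [x _ ->] /mapP [y _]] //.
Qed.

Lemma size_phi u : size (phi u) = size u.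
Proof.
elim: u => [|b u IH] //; move: IH; rewrite /phi !size_cat; case: b => /=;
  rewrite size_rcons; lia.
Qed.

Lemma ndes_desc m (s : 'S_m) : ndes s = desc (oneline s).
Proof. by rewrite /ndes /desc size_oneline. Qed.

Lemma card_Gm m k : #|Gm_id m k| = count (fun u => (lisw u < k) && good u) (allw m).
Proof.
set W := filter (fun u => (lisw u < k) && good u) (allw m).
pose psi u := odflt 1%g [pick s : 'S_m | oneline s == phi u].
have onpsi u : size u = m -> oneline (psi u) = phi u.
  move=> su; have [sA sB un me szA] := phi_props u.
  have szp : size (phi u) = m by rewrite size_phi.
  have ltp : forall x, x \in phi u -> x < m by move=> x; rewrite me su.
  have [s0 es0] := @perm_exists m (phi u) un szp ltp.
  rewrite /psi; case: pickP => [s /eqP // | H].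
  by move: (H s0); rewrite es0 eqxx.
have HG : Gm_id m k =i map psi W.
  move=> s; rewrite inE /grassmannian /avoids ndes_desc; apply/andP/mapP.
  - move=> [/desc_split [A [B [eL sA sB]]] nc].
    have un := oneline_uniq s; rewrite eL cat_uniq in un; case/and3P: un => uA _ uB.
    have sA' : sorted ltn A by rewrite ltn_sorted_uniq_leq uA.
    have sB' : sorted ltn B by rewrite ltn_sorted_uniq_leq uB.
    have [u [su epu gu]] : exists u, [/\ size u = m, phi u = oneline s & good u].
      case so: (sorted ltn (oneline s)).
      + exists (nseq m false); have [eA eB] := phi_nseq m.
        split; first by rewrite size_nseq.
        * rewrite /phi eA eB /=; apply: (irr_sorted_eq ltn_trans) => //.
            by move=> x; rewrite ltnn.
          exact: iota_ltn_sorted.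
          by move=> v; rewrite mem_oneline mem_iota.
        * by rewrite /good eA.
      + have unL : uniq (A ++ B) by rewrite -eL oneline_uniq.
        have meL : forall v, (v \in A ++ B) = (v < m) by move=> v; rewrite -eL mem_oneline.
        have [u [su eA eB]] := @phi_split A B m sA' sB' unL meL.
        exists u; split => //; first by rewrite /phi eA eB eL.
        by rewrite /good /phi eA eB -eL so orbT.
    exists u.
    + rewrite mem_filter mem_allw su eqxx gu andbT andbT ltnNge.
      apply/negP => /hasinc_phi; rewrite epu => /contains_hasinc; by rewrite (negbTE nc).
    + by apply: oneline_inj; rewrite onpsi.
  - move=> [u]; rewrite mem_filter mem_allw => /andP [/andP [lk gu] /eqP su] ->.
    rewrite onpsi //; split.
    + have [sA sB _ _ _] := phi_props u.
      by apply: desc_cat; [apply: (sub_sorted _ sA) | apply: (sub_sorted _ sB)] => x y /ltnW.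
    + apply/negP => /contains_hasinc; rewrite onpsi // => /hasinc_phi.
      by rewrite leqNgt lk.
have uW : uniq (map psi W).
  rewrite map_inj_in_uniq ?filter_uniq ?uniq_allw //.
  move=> u v; rewrite !mem_filter !mem_allw => /andP [/andP [_ gu] /eqP su] /andP [/andP [_ gv] /eqP sv] e.
  apply: phi_inj => //; first by rewrite su sv.
  by rewrite -onpsi // e onpsi.
rewrite (eq_card HG); move/card_uniqP: uW => ->.
by rewrite size_map size_filter.
Qed.

Definition gd d u := maxn (lisw u) (d + count id u).
Definition Sf L n d := \sum_(0 <= m < L) count (fun u => gd d u <= n) (allw m).

Lemma count_allwS (p : pred (seq bool)) m :
  count p (allw m.+1) = count (fun u => p (true :: u)) (allw m) + count (fun u => p (false :: u)) (allw m).
Proof. by rewrite /= count_cat !count_map. Qed.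

Lemma gd_true d u : gd d (true :: u) = gd d.+1 u.
Proof. rewrite /gd /=; have := count_le_lisw u; lia. Qed.

Lemma gd_false d u : gd d (false :: u) = (gd d.-1 u).+1.
Proof. rewrite /gd /=; have := count_le_lisw u; lia. Qed.

Lemma Sf_rec L n d : Sf L.+1 n d = (d <= n) + Sf L n d.+1 + (if n is n'.+1 then Sf L n' d.-1 else 0).
Proof.
rewrite /Sf big_nat_recl // /= (_ : gd d [::] = d); last by rewrite /gd /= addn0 max0n.
rewrite addn0 -addnA; congr (_ + _).
case: n => [|n]; rewrite ?addn0; [ | rewrite -big_split]; apply: eq_bigr => m _;
  rewrite count_cat !count_map.
- rewrite [X in _ + X](eq_count (a2 := pred0)) ?count_pred0 ?addn0.
  + by apply: eq_count => u; rewrite /= gd_true.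
  + by move=> u; rewrite /= gd_false.
- by congr (_ + _); apply: eq_count => u; rewrite /= ?gd_true ?gd_false.
Qed.

Lemma Sf_zero L n d : n < d -> Sf L n d = 0.
Proof.
move=> nd; rewrite /Sf big1 // => m _.
rewrite (eq_count (a2 := pred0)) ?count_pred0 // => u /=.
apply/negbTE; rewrite -ltnNge /gd; lia.
Qed.

Lemma Sf_closed L : forall n d e, n = d + e -> d + 2 * e < L ->
  Sf L n d + 1 + 'C(d + 2 * e + 3, e) = 'C(d + 2 * e + 3, e.+1).
Proof.
elim: L => [|L IH] n d e ne lt; first by [].
rewrite Sf_rec.
case: e ne lt => [|e'] ne lt; case: d ne lt => [|d'] ne lt.
- subst n; rewrite Sf_zero //.
- subst n; rewrite !addn0 /= (@Sf_zero L d'.+1 d'.+2); last lia.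
  have := IH d' d' 0 (esym (addn0 d')) ltac:(lia).
  rewrite !addn0 !bin0 !bin1 ltnSn; lia.
- subst n; rewrite add0n /=.
  have hY := IH e' 0 e' (esym (add0n e')) ltac:(lia).
  have hX := IH e'.+1 1 e' ltac:(lia) ltac:(lia).
  rewrite add0n in hY.
  rewrite (_ : 1 + 2 * e' + 3 = (2 * e' + 3).+1) in hX; last lia.
  rewrite (_ : 2 * e'.+1 + 3 = (2 * e' + 3).+2); last lia.
  have p1 := binS (2 * e' + 3).+1 e'.+1.
  have p2 := binS (2 * e' + 3).+1 e'.
  have p3 := binS (2 * e' + 3) e'.+1.
  have p4 := binS (2 * e' + 3) e'.
  have sym : 'C(2 * e' + 3, e'.+2) = 'C(2 * e' + 3, e'.+1).
    rewrite -bin_sub; last lia.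
    congr 'C(_, _); lia.
  rewrite /= in hX; lia.
- subst n; rewrite /=.
  have hY := IH (d' + e'.+1) d' e'.+1 ltac:(lia) ltac:(lia).
  have hX := IH (d'.+1 + e'.+1) d'.+2 e' ltac:(lia) ltac:(lia).
  have -> : d'.+1 + e'.+1 = (d' + e'.+1).+1 by lia.
  rewrite (_ : d'.+2 + 2 * e' + 3 = d' + 2 * e'.+1 + 3) in hX; last lia.
  rewrite (_ : d'.+1 + 2 * e'.+1 + 3 = (d' + 2 * e'.+1 + 3).+1); last lia.
  rewrite (_ : d'.+1 + e'.+1 = (d' + e'.+1).+1) in hX; last lia.
  have p1 := binS (d' + 2 * e'.+1 + 3) e'.+1.
  have p2 := binS (d' + 2 * e'.+1 + 3) e'.
  lia.
Qed.

Lemma count_split T (a b : pred T) s :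
  count (fun x => a x && b x) s + count (fun x => a x && ~~ b x) s = count a s.
Proof. elim: s => //= x s IH; case: (a x); case: (b x) => /=; lia. Qed.

Lemma lisw_le_size u : lisw u <= size u.
Proof. elim: u => //= b u IH; have := count_size id u; case: b => /=; lia. Qed.

Lemma notgood_lisw u : ~~ good u -> lisw u = size u.
Proof.
rewrite /good negb_or negbK => /andP [_ so].
apply/eqP; rewrite eqn_leq lisw_le_size /=; apply/hasinc_phi.
by exists (phi u); split; [exact: subseq_refl | done | exact: size_phi].
Qed.

Lemma notgood_true u : ~~ good (true :: u) = (phiB u == [::]).
Proof.
have lt v : v \in phi u -> v < size u by move/phi_lt.
have [sA sB _ _ _] := phi_props u.
rewrite /good /phi /= negb_or negbK.
have -> : (rcons (phiA u) (size u) == [::]) = false by case: (phiA u).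
rewrite /=; case eB: (phiB u) => [|b B] /=.
- rewrite cats0; apply: sorted_rcons_lt => // x xA; apply: lt; by rewrite mem_cat xA.
- apply/negP; rewrite cat_rcons => so.
  have : sorted ltn [:: size u, b & B] by apply: (subseq_sorted ltn_trans _ so); apply: suffix_subseq.
  have : b < size u by apply: lt; rewrite mem_cat eB mem_head orbT.
  by move=> h /= /andP [] h2; move: (ltn_trans h h2); rewrite ltnn.
Qed.

Lemma notgood_false u : ~~ good (false :: u) = ~~ good u.
Proof.
have lt v : v \in phi u -> v < size u by move/phi_lt.
rewrite /good /phi /= -rcons_cat; congr (~~ (_ || ~~ _)).
apply/idP/idP => so.
- exact: (subseq_sorted ltn_trans (subseq_rcons _ _) so).
- apply: sorted_rcons_lt => //; exact: lt.
Qed.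

Lemma phiB_nil_all u : (phiB u == [::]) = all id u.
Proof. elim: u => //= b u IH; case: b => //=; by case: (phiB u). Qed.

Lemma count_all m : count (all id) (allw m) = 1.
Proof.
elim: m => //= m IH; rewrite count_cat !count_map.
rewrite [X in _ + X](eq_count (a2 := pred0)) ?count_pred0 ?addn0 //.
Qed.

Lemma count_notgood m : count (fun u => ~~ good u) (allw m) = m.
Proof.
elim: m => //= m IH; rewrite count_cat !count_map.
rewrite (eq_count (a1 := preim _ _) (a2 := all id)); last by move=> u /=; rewrite notgood_true phiB_nil_all.
rewrite count_all (eq_count (a1 := preim _ _) (a2 := fun u => ~~ good u)); last by move=> u /=; rewrite notgood_false.
by rewrite IH.
Qed.

Lemma count_bad m k : count (fun u => (lisw u < k) && ~~ good u) (allw m) = (m < k) * m.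
Proof.
rewrite (eq_in_count (a2 := fun u => (m < k) && ~~ good u)).
  by case: (m < k); rewrite ?mul1n ?mul0n ?count_notgood // (eq_count (a2 := pred0)) ?count_pred0.
move=> u; rewrite mem_allw => /eqP su /=.
case g: (good u) => /=; first by rewrite !andbF.
by rewrite notgood_lisw ?g // su.
Qed.

Lemma size_le_lisw u : size u <= 2 * lisw u.
Proof.
have := count_predC id u; have := count_le_lisw u; have := countn_le_lisw u.
rewrite (eq_count (a1 := predC id) (a2 := negb)) //; lia.
Qed.

Lemma catalanE n : catalan n = 'C(2 * n, n) - 'C(2 * n, n.+1).
Proof.
rewrite /catalan.
have h := mul_bin_left (2 * n) n.
have e : 'C(2 * n, n) = n.+1 * ('C(2 * n, n) - 'C(2 * n, n.+1)).
  rewrite mulnBr h (_ : 2 * n - n = n); last lia.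
  by rewrite mulSn addnK.
by rewrite {1}e mulKn.
Qed.

Lemma catalan_k k' : catalan k'.+2 = 'C(2 * k' + 3, k'.+1) - 'C(2 * k' + 3, k').
Proof.
rewrite catalanE (_ : 2 * k'.+2 = (2 * k' + 3).+1); last lia.
rewrite !binS.
have s1 : 'C(2 * k' + 3, k'.+2) = 'C(2 * k' + 3, k'.+1).
  rewrite -bin_sub; last lia. congr 'C(_, _); lia.
have s2 : 'C(2 * k' + 3, k'.+3) = 'C(2 * k' + 3, k').
  rewrite -bin_sub; last lia. congr 'C(_, _); lia.
rewrite s1 s2; lia.
Qed.

Lemma sum_bad k' : \sum_(0 <= m < 2 * k' + 1) (m < k'.+1) * m = 'C(k'.+1, 2).
Proof.
rewrite (@big_cat_nat _ _ _ k'.+1) //=; last lia.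
rewrite [X in _ + X](eq_big_nat _ _ (F2 := fun _ => 0)); last first.
  by move=> i /andP [h _]; rewrite ltnNge h.
rewrite [X in _ + X]big1 // addn0 -bin2_sum; apply: eq_big_nat => i /andP [_ h].
by rewrite h mul1n.
Qed.

Theorem corollary3p8 (k : nat) (hk : 1 <= k) :
  \sum_(0 <= m < (2 * k - 2).+1) #|Gm_id m k| = catalan k.+1 - 'C(k, 2) - 1
  /\ (forall m : nat, 2 * k - 1 <= m -> #|Gm_id m k| = 0).
Proof.
split; last first.
  move=> m mk; rewrite card_Gm (eq_in_count (a2 := pred0)) ?count_pred0 //.
  move=> u; rewrite mem_allw => /eqP su /=; apply/negbTE; rewrite negb_and -leqNgt.
  have := size_le_lisw u; rewrite su => h; apply/orP; left; lia.
case: k hk => [//|k'] _.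
have pw m : count (fun u => gd 0 u <= k') (allw m) = #|Gm_id m k'.+1| + (m < k'.+1) * m.
  rewrite card_Gm -count_bad count_split; apply: eq_count => u.
  by rewrite /gd add0n (maxn_idPl (count_le_lisw u)) ltnS.
have Ssum : Sf (2 * k' + 1) k' 0 =
    \sum_(0 <= m < 2 * k' + 1) #|Gm_id m k'.+1| + \sum_(0 <= m < 2 * k' + 1) (m < k'.+1) * m.
  by rewrite /Sf (eq_bigr _ (fun m _ => pw m)) big_split.
have cl := @Sf_closed (2 * k' + 1) k' 0 k' (esym (add0n k')) ltac:(lia).
rewrite add0n in cl.
rewrite (_ : (2 * k'.+1 - 2).+1 = 2 * k' + 1); last lia.
rewrite catalan_k; move: Ssum cl; rewrite sum_bad; lia.
Qed.
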